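(* Let $d$ be a compatible metric on the Cantor space $\mathbf{C}$, let $h:\mathbf{C}\to\mathbf{C}$ be an isometry of $(\mathbf{C},d)$ and let $\varepsilon>0$. Then there is a finite partition $\mathcal{V}$ of $\mathbf{C}$ into clopen sets, each of diameter less than $\varepsilon$, such that the digraph $(\mathcal{V},h)$ is a disjoint union of directed cycles.
   Context: For a finite clopen partition $\mathcal{V}$ of $\mathbf{C}$ and a map $h$, the digraph $(\mathcal{V},h)$ has vertex set $\mathcal{V}$ and a directed edge from $a$ to $b$ if and only if $h(a)\cap b\ne\emptyset$. *)

(* Defs.v *)
From HB Require Import structures.
From mathcomp Require Import all_boot all_order all_algebra all_fingroup.
From mathcomp Require Import all_classical all_reals topology cantor.
Set Implicit Arguments. Unset Strict Implicit. Unset Printing Implicit Defensive.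
Import Order.TTheory GRing.Theory Num.Theory.
Local Open Scope classical_set_scope.
Local Open Scope ring_scope.

Definition compatible_metric (R : realType) (d : cantor_space -> cantor_space -> R) : Prop :=
  [/\ (forall x y, 0 <= d x y),
      (forall x y, d x y = 0 <-> x = y),
      (forall x y, d x y = d y x),
      (forall x y z, d x z <= d x y + d y z) &
      (forall A : set cantor_space,
          open A <-> (forall x, A x -> exists2 e : R, 0 < e & [set y | d x y < e] `<=` A))].

Definition is_isometry (R : realType) (d : cantor_space -> cantor_space -> R)
  (h : cantor_space -> cantor_space) : Prop :=
  forall x y, d (h x) (h y) = d x y.

Definition diam_lt (R : realType) (d : cantor_space -> cantor_space -> R)
  (A : set cantor_space) (eps : R) : Prop :=
  exists2 r : R, r < eps & forall x y, A x -> A y -> d x y <= r.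

Definition clopen_partition (n : nat) (V : 'I_n -> set cantor_space) : Prop :=
  [/\ (forall i, clopen (V i)),
      (forall i, V i !=set0),
      (forall i j, i != j -> V i `&` V j = set0) &
      (forall x, exists i, V i x)].

Definition dg_edge (n : nat) (V : 'I_n -> set cantor_space)
  (h : cantor_space -> cantor_space) (a b : 'I_n) : Prop :=
  (h @` V a) `&` V b !=set0.

(* a finite digraph on 'I_n is a disjoint union of directed cycles iff its
   edge relation is the graph of a permutation *)
Definition disjoint_union_of_cycles (n : nat) (E : 'I_n -> 'I_n -> Prop) : Prop :=
  exists s : {perm 'I_n}, forall a b, E a b <-> b = s a.

(* Main.v *)
Require Import Defs.
From HB Require Import structures.
From mathcomp Require Import all_boot all_order all_algebra all_fingroup finmap.
From mathcomp Require Import lra.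
From mathcomp Require Import all_classical all_reals topology cantor.
Import Order.TTheory GRing.Theory Num.Theory.
Local Open Scope classical_set_scope.
Local Open Scope ring_scope.

Definition agree (N : nat) (x y : cantor_space) := forall i, (i < N)%N -> x i = y i.

Lemma cyl_nbhs (A : set cantor_space) x : open A -> A x ->
  exists N, forall y, agree N y x -> A y.
Proof.
move=> oA Ax.
pose F := filter_from [set: nat] (fun N => [set y : cantor_space | agree N y x]).
have FF : ProperFilter F.
  apply: filter_from_proper.
  apply: filter_from_filter; first by exists 0%N.
  move=> i j _ _; exists (maxn i j) => //= y H; split => k Hk; apply: H;
    rewrite leq_max Hk ?orbT //.
  by move=> i _; exists x.
have : F --> x.
  apply/pointwise_cvgP => t.
  move=> B /= Bx.
  exists t.+1 => // y /= Hy; rewrite (Hy t (ltnSn t)).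
  exact: nbhs_singleton.
move=> /(_ A) /= []; first exact: open_nbhs_nbhs.
by move=> N _ H; exists N.
Qed.

Lemma cyl_open N (x : cantor_space) : open [set y : cantor_space | agree N y x].
Proof.
elim: N => [|N IH].
  have -> : [set y : cantor_space | agree 0 y x] = setT.
    by apply/seteqP; split => y //= _ i.
  exact: openT.
have -> : [set y : cantor_space | agree N.+1 y x] =
  [set y : cantor_space | agree N y x] `&` (proj N @^-1` [set x N]).
  apply/seteqP; split => y /=.
    by move=> H; split; [move=> i Hi; apply: H; apply: ltnW|apply: H].
  move=> [H1 H2] i; rewrite ltnS leq_eqVlt => /orP[/eqP->|]; first exact: H2.
  exact: H1.
apply: openI => //; apply: open_comp; last exact: discrete_open.
move=> y _; exact: proj_continuous.
Qed.

Lemma list_min (R : realType) (s : seq cantor_space) (e : cantor_space -> R) :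
  (forall x, 0 < e x) -> exists2 r, 0 < r & forall x, x \in s -> r <= e x.
Proof.
move=> He; elim: s => [|a s [r r0 Hr]]; first by exists 1.
exists (Num.min r (e a)); first by rewrite lt_min r0 He.
move=> x; rewrite in_cons => /orP[/eqP->|/Hr xs]; first by rewrite ge_min lexx orbT.
by rewrite ge_min xs.
Qed.

Lemma list_max (s : seq cantor_space) (f : cantor_space -> nat) :
  exists N, forall x, x \in s -> (f x <= N)%N.
Proof.
elim: s => [|a s [N HN]]; first by exists 0%N.
exists (maxn N (f a)) => x; rewrite in_cons => /orP[/eqP->|/HN xs].
  by rewrite leq_max leqnn orbT.
by rewrite leq_max xs.
Qed.

Section Metric.
Variables (R : realType) (d : cantor_space -> cantor_space -> R).
Hypothesis Hd : compatible_metric d.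

Lemma d_sym x y : d x y = d y x.
Proof. by case: Hd. Qed.
Lemma d_tri x y z : d x z <= d x y + d y z.
Proof. by case: Hd. Qed.
Lemma d_refl x : d x x = 0.
Proof. by case: Hd => _ H _ _ _; apply/H. Qed.

Lemma open_d (A : set cantor_space) :
  (forall x, A x -> exists2 e : R, 0 < e & [set y | d x y < e] `<=` A) -> open A.
Proof. by case: Hd => _ _ _ _ H; move/H. Qed.

Lemma d_open (A : set cantor_space) : open A ->
  (forall x, A x -> exists2 e : R, 0 < e & [set y | d x y < e] `<=` A).
Proof. by case: Hd => _ _ _ _ H; move/H. Qed.

Lemma ball_open x e : open [set y | d x y < e].
Proof.
apply: open_d => y /= Hy; exists (e - d x y); first by rewrite subr_gt0.
move=> z /= Hz; apply: (le_lt_trans (d_tri x y z)).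
by rewrite -ltrBrDl.
Qed.

Lemma mesh r : 0 < r -> exists N, forall x y, agree N x y -> d x y < r.
Proof.
move=> r0.
have : forall x, exists N, forall y, agree N y x -> d x y < r / 2.
  move=> x; apply: cyl_nbhs; first exact: ball_open.
  by rewrite /= d_refl divr_gt0.
move=> /choice [Nf HNf].
have := cantor_space_compact; rewrite compact_cover => /(_ cantor_space setT
  (fun x => [set y | agree (Nf x) y x])).
case.
- by move=> x _; exact: cyl_open.
- by move=> x _; exists x => //= i.
move=> D' _ Hcov.
have [N HN] := list_max D' Nf.
exists N => x y Hxy.
have [z Dz /= Hxz] := Hcov x I.
have Hyz : agree (Nf z) y z.
  move=> i Hi; rewrite -Hxy; first exact: Hxz.
  exact: leq_trans Hi (HN z Dz).
have := HNf z x Hxz; have := HNf z y Hyz => H1 H2.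
apply: (le_lt_trans (d_tri x z y)); rewrite d_sym.
by rewrite [r]splitr ltrD.
Qed.

Lemma lebesgue N : exists2 del : R, 0 < del &
  forall x y, d x y < del -> agree N x y.
Proof.
have : forall x, exists e : R, 0 < e /\ [set y | d x y < e] `<=` [set y | agree N y x].
  move=> x; have [e e0 He] := @d_open _ (cyl_open N x) x (fun i _ => erefl).
  by exists e.
move=> /choice [ef Hef].
have := cantor_space_compact; rewrite compact_cover => /(_ cantor_space setT
  (fun x => [set y | d x y < ef x / 2])).
case.
- by move=> x _; exact: ball_open.
- by move=> x _; exists x => //=; rewrite d_refl divr_gt0 //; case: (Hef x).
move=> D' _ Hcov.
have [del del0 Hdel] := @list_min R D' (fun x => ef x / 2) (fun x => divr_gt0 (proj1 (Hef x)) (ltr0Sn _ 1)).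
exists del => // x y Hxy.
have [z Dz /= Hzx] := Hcov x I.
have Hzy : d z y < ef z.
  apply: (le_lt_trans (d_tri z x y)).
  have := Hdel z Dz; move: Hzx Hxy; lra.
have ez := proj1 (Hef z).
have Ax := proj2 (Hef z) x (lt_trans Hzx (ltac:(lra) : ef z / 2 < ef z)).
have Ay := proj2 (Hef z) y Hzy.
by move=> i Hi; rewrite (Ax i Hi) (Ay i Hi).
Qed.
End Metric.
Arguments mesh {R d}.
Arguments lebesgue {R d}.
Arguments open_d {R d}.
Arguments d_sym {R d}.

Theorem proposition6p3 (R : realType) (d : cantor_space -> cantor_space -> R)
  (h : cantor_space -> cantor_space) (eps : R) :
  compatible_metric d -> is_isometry d h -> 0 < eps ->
  exists (n : nat) (V : 'I_n -> set cantor_space),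
    [/\ clopen_partition V,
        (forall i, diam_lt d (V i) eps) &
        disjoint_union_of_cycles (dg_edge V h)].
Proof.
move=> Hd Hh eps0.
have [N1 HN1] := mesh Hd (eps / 2) (ltac:(lra) : 0 < eps / 2).
have [del del0 Hdel] := lebesgue Hd N1.
have [N2 HN2] := mesh Hd del del0.
have iso_iter : forall m a b, d (iter m h a) (iter m h b) = d a b.
  by elim => [//|m IH] a b; rewrite !iterS Hh IH.
pose sim x y := forall m, agree N1 (iter m h x) (iter m h y).
have simR : forall x, sim x x by move=> x m i.
have simC : forall x y, sim x y -> sim y x.
  by move=> x y H m i Hi; rewrite (H m i Hi).
have simT : forall x y z, sim x y -> sim y z -> sim x z.
  by move=> x y z H1 H2 m i Hi; rewrite (H1 m i Hi) (H2 m i Hi).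
have sim_d : forall x y, d x y < del -> sim x y.
  by move=> x y H m; apply: Hdel; rewrite iso_iter.
have sim_h : forall x y, sim x y -> sim (h x) (h y).
  by move=> x y H m; rewrite -!iterSr; exact: (H m.+1).
have sim_eps : forall x y, sim x y -> d x y < eps / 2.
  by move=> x y H; apply: HN1; exact: (H 0%N).
pose cls x := [set y | sim x y].
have clsE : forall a b, sim a b -> cls a = cls b.
  move=> a b H; apply/seteqP; split => y /= Hy.
    exact: simT (simC _ _ H) Hy.
  exact: simT H Hy.
pose pre (x : cantor_space) : {ffun 'I_N2 -> bool} := [ffun i : 'I_N2 => x (nat_of_ord i)].
pose ext (t : {ffun 'I_N2 -> bool}) : cantor_space :=
  fun i => if (insub i : option 'I_N2) is Some j then t j else false.
have ext_pre : forall x, agree N2 (ext (pre x)) x.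
  by move=> x i Hi; rewrite /ext insubT /= ffunE.
pose L := undup [seq cls (ext t) | t <- enum {ffun 'I_N2 -> bool}].
have Luniq : uniq L by exact: undup_uniq.
have inL : forall x, cls x \in L.
  move=> x; rewrite mem_undup; apply/mapP; exists (pre x); first by rewrite mem_enum.
  apply: clsE; apply: sim_d; rewrite (d_sym Hd); apply: HN2; exact: ext_pre.
have Lcls : forall S, S \in L -> exists a, S = cls a.
  by move=> S; rewrite mem_undup => /mapP [t _ ->]; exists (ext t).
pose n := size L.
pose V (i : 'I_n) := nth set0 L i.
have Vcls : forall i, exists a, V i = cls a.
  by move=> i; apply: Lcls; apply: mem_nth.
have Vsim : forall i x y, V i x -> sim x y -> V i y.
  move=> i x y; have [a ->] := Vcls i => /= H1 H2; exact: simT H1 H2.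
have Vin : forall i x y, V i x -> V i y -> sim x y.
  move=> i x y; have [a ->] := Vcls i => /= H1 H2; exact: simT (simC _ _ H1) H2.
have Vdisj : forall i j x, V i x -> V j x -> i = j.
  move=> i j x Hi Hj; apply: val_inj; apply/eqP.
  rewrite -(nth_uniq set0 (ltn_ord i) (ltn_ord j) Luniq); apply/eqP.
  have [a Ea] := Vcls i; have [b Eb] := Vcls j.
  rewrite -/(V i) -/(V j) Ea Eb.
  rewrite Ea in Hi; rewrite Eb in Hj.
  by rewrite (clsE _ _ Hi) (clsE _ _ Hj).
have Vcov : forall x, exists i, V i x.
  move=> x; have Hx : (index (cls x) L < n)%N by rewrite index_mem.
  exists (Ordinal Hx); rewrite /V /= nth_index //; exact: simR.
have Vne : forall i, V i !=set0.
  by move=> i; have [a Ea] := Vcls i; exists a; rewrite Ea; exact: simR.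
have Vopen : forall i, open (V i).
  move=> i; apply: (open_d Hd) => x Hx; exists del => // y /= Hy.
  exact: Vsim Hx (sim_d _ _ Hy).
have Vclosed : forall i, closed (V i).
  move=> i; rewrite -[V i]setCK closedC; apply: (open_d Hd) => x Hx.
  exists del => // y /= Hy Viy; apply: Hx.
  by apply: Vsim Viy _; apply: simC; apply: sim_d.
have Vh : forall a b x x', V a x -> V b (h x) -> V a x' -> V b (h x').
  move=> a b x x' Hx Hhx Hx'; apply: Vsim Hhx _; apply: sim_h; exact: Vin Hx Hx'.
pose g (a : 'I_n) := odflt a [pick b | `[< dg_edge V h a b >]].
have gedge : forall a, dg_edge V h a (g a).
  move=> a; rewrite /g; case: pickP => [b /asboolP //|H].
  exfalso; have [x Hx] := Vne a; have [j Hj] := Vcov (h x).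
  have := H j; rewrite asboolT //; exists (h x); split => //; by exists x.
have gstep : forall c x, V c x -> V (g c) (h x).
  move=> c x Hx; have [z [[x' Hx' <-] Hz]] := gedge c; exact: Vh Hx' Hz Hx.
have edgeE : forall a b, dg_edge V h a b <-> b = g a.
  move=> a b; split; last by move=> ->; exact: gedge.
  move=> [z [[x Hx <-] Hb]]; exact: Vdisj Hb (gstep _ _ Hx).
have gsurj : forall j, exists i, g i = j.
  move=> j; apply: contrapT => Hn.
  have [y Vy] := Vne j.
  have orbit : forall m, V (iter m g j) (iter m h y).
    by elim => [//|m IH]; rewrite !iterS; exact: gstep.
  have far : forall m, (0 < m)%N -> del <= d y (iter m h y).
    move=> [//|m] _; rewrite leNgt; apply/negP => Hlt.
    have Vj := Vsim j _ _ Vy (sim_d _ _ Hlt).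
    have := Vdisj _ _ _ (orbit m.+1) Vj; rewrite iterS => E.
    by apply: Hn; exists (iter m g j).
  pose P (m : 'I_(2 ^ N2).+1) := pre (iter m h y).
  have Pinj : injective P.
    move=> m k Hmk.
    have Hag : agree N2 (iter m h y) (iter k h y).
      move=> i Hi; have := congr1 (fun f : {ffun 'I_N2 -> bool} => f (Ordinal Hi)) Hmk.
      by rewrite /P !ffunE.
    have dlt := HN2 _ _ Hag.
    case: (ltngtP m k) => [mk|km|/val_inj //].
      have E : iter k h y = iter m h (iter (k - m) h y) by rewrite -iterD subnKC // ltnW.
      rewrite E iso_iter in dlt.
      have H := far (k - m)%N; rewrite subn_gt0 in H.
      have := lt_le_trans dlt (H mk); rewrite ltxx.
      done.
    have E : iter m h y = iter k h (iter (m - k) h y) by rewrite -iterD subnKC // ltnW.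
    rewrite E (d_sym Hd) iso_iter in dlt.
    have H := far (m - k)%N; rewrite subn_gt0 in H.
    have := lt_le_trans dlt (H km); rewrite ltxx.
    done.
  have := leq_card P Pinj; rewrite card_ffun card_bool !card_ord.
  by rewrite ltnn.
have ginj : injective g.
  have /choice [r Hr] := gsurj.
  have rinj : injective r := can_inj Hr.
  have [r' rr' r'r] := injF_bij rinj.
  have E : forall x, g x = r' x by move=> x; rewrite -{1}(r'r x) Hr.
  by move=> x y Hxy; rewrite !E in Hxy; rewrite -(r'r x) Hxy r'r.
exists n, V; split.
- split; [by move=> i; split; [exact: Vopen|exact: Vclosed] | exact: Vne | | exact: Vcov].
  move=> i j ij; apply/disjoints_subset => x Hi Hj.
  by move/eqP: ij; apply; exact: Vdisj Hi Hj.
- move=> i; exists (eps / 2); first lra.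
  by move=> x y Hx Hy; apply/ltW/sim_eps/(Vin _ _ _ Hx Hy).
- by exists (perm ginj) => a b; rewrite permE; exact: edgeE.
Qed.
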